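(* Let $\omega(n)\to+\infty$. If $p=p(n)$ satisfies \[2\frac{\log(n)+\omega(n)}{n}\le p\le 1-\frac{\log(n)+\log(\log(n))+\omega(n)}{n},\] then the probability that $\Gamma\in G(n,p)$ has a non-adjacent domination pair tends to $0$ as $n\to\infty$.
   Context: $G(n,p)$ is the Erdős–Rényi random graph on $n$ vertices with each edge present independently with probability $p$; $\log$ is the natural logarithm. For distinct vertices $a,b$, $a$ dominates $b$ if every vertex adjacent to $b$ is adjacent to or equal to $a$; the pair is non-adjacent if $a$ and $b$ are not adjacent. *)

(* Defs.v *)
From HB Require Import structures.
From mathcomp Require Import all_boot all_order all_algebra.
From mathcomp Require Import all_classical all_reals all_analysis.
Set Implicit Arguments. Unset Strict Implicit. Unset Printing Implicit Defensive.
Import Order.TTheory GRing.Theory Num.Theory.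
Local Open Scope ring_scope.

(* A simple graph on vertex set 'I_n is given by its edge set E, a set of
   2-element subsets of 'I_n. *)
Definition pairs (n : nat) : {set {set 'I_n}} := [set e : {set 'I_n} | #|e| == 2%N].

Definition is_graph (n : nat) (E : {set {set 'I_n}}) : bool := E \subset pairs n.

Definition adj (n : nat) (E : {set {set 'I_n}}) (a b : 'I_n) : bool :=
  (a != b) && ([set a; b] \in E).

Definition dominates (n : nat) (E : {set {set 'I_n}}) (a b : 'I_n) : bool :=
  [forall v, adj E v b ==> (adj E v a || (v == a))].

Definition has_nonadj_dom_pair (n : nat) (E : {set {set 'I_n}}) : bool :=
  [exists a, exists b, [&& a != b, ~~ adj E a b & dominates E a b]].

Definition gnp_weight (R : realType) (n : nat) (p : R) (E : {set {set 'I_n}}) : R :=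
  p ^+ #|E| * (1 - p) ^+ ('C(n, 2) - #|E|).

Definition gnp_prob (R : realType) (n : nat) (p : R) (P : {set {set 'I_n}} -> bool) : R :=
  \sum_(E : {set {set 'I_n}} | is_graph E && P E) gnp_weight p E.

(* Main.v *)
Require Import Defs.
From HB Require Import structures.
From mathcomp Require Import all_boot all_order all_algebra.
From mathcomp Require Import all_classical all_reals all_analysis.
Import Order.TTheory GRing.Theory Num.Theory.
Import numFieldNormedType.Exports.
Local Open Scope ring_scope.

Section Comb.
Variable R : realType.

Lemma prod_if0 (I : finType) (A : pred I) (P : pred I) (c : R) :
  \prod_(i in A) (if P i then c else 0) =
  if [forall i in A, P i] then c ^+ #|A| else 0.
Proof.
case: ifP => [/forallP H|/negbT].
  rewrite -prodr_const; apply: eq_bigr => i Ai.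
  by have := H i; rewrite Ai /= => ->.
rewrite negb_forall => /existsP [i]; rewrite negb_imply => /andP [Ai nPi].
by rewrite (bigD1 i Ai) /= (negbTE nPi) mul0r.
Qed.

Lemma prod_bool (I : finType) (A : pred I) (P : pred I) :
  \prod_(i in A) ((P i)%:R : R) = ([forall i in A, P i])%:R.
Proof.
rewrite (eq_bigr (fun i => if P i then 1 else 0)); last by move=> i _; case: (P i).
rewrite prod_if0 expr1n; by case: ifP.
Qed.

Lemma split_prodG (I : finType) (A : {set I}) (g : I -> R) :
  \prod_i g i = \prod_(i in A) g i * \prod_(i in ~: A) g i.
Proof.
rewrite (bigID (fun e => e \in A)) /=; congr (_ * _).
by apply: eq_bigl => e; rewrite inE.
Qed.

Variable n : nat.
Implicit Types (E : {set {set 'I_n}}) (a b v w : 'I_n).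

Lemma pair_in (x y : 'I_n) : ([set x; y] \in pairs n) = (x != y).
Proof. by rewrite inE cards2; case: (x != y). Qed.

Lemma card_pairs : #|pairs n| = 'C(n, 2).
Proof. by rewrite /pairs card_draws card_ord. Qed.

Lemma set2_eq x y z w : [set x; y] = [set z; w] -> x != y -> (x == z) || (x == w).
Proof.
move=> H _. have : x \in [set z; w] by rewrite -H !inE eqxx.
by rewrite !inE.
Qed.

End Comb.

Lemma in2_eq (n : nat) (u x y z w : 'I_n) : [set x; y] = [set z; w] -> u \in [set x; y] -> (u == z) || (u == w).
Proof. by move=> H uin; move: uin; rewrite H !inE. Qed.

Arguments in2_eq {n} u {x y z w}.
Section Main.
Variables (R : realType) (n : nat) (p : R) (a b : 'I_n) (T : {set 'I_n}).
Hypothesis ab : a != b.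
Hypothesis TS : forall v, v \in T -> (v != a) && (v != b).
Let q := 1 - p.
Let As := [set [set v; a] | v in T].
Let Bs := [set [set v; b] | v in T].
Let P1 (e : {set 'I_n}) := [&& e \in pairs n, e != [set a; b] & e \notin As].
Let P2 (e : {set 'I_n}) := e \notin Bs.
Let F1 (e : {set 'I_n}) : R := if P1 e then p else 0.
Let F2 (e : {set 'I_n}) : R := if e \in pairs n then (if P2 e then q else 0) else 1.

Lemma split_prod (E : {set {set 'I_n}}) (g : {set 'I_n} -> R) :
  \prod_e g e = \prod_(e in E) g e * \prod_(e in ~: E) g e.
Proof.
rewrite (bigID (fun e => e \in E)) /=; congr (_ * _).
by apply: eq_bigl => e; rewrite inE.
Qed.

Lemma rhs_eq (E : {set {set 'I_n}}) :
  \prod_e (if e \in E then F1 e else F2 e) =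
  if [forall e in E, P1 e] && [forall e in ~: E :&: pairs n, P2 e]
  then p ^+ #|E| * q ^+ #|~: E :&: pairs n| else 0.
Proof.
rewrite (split_prod E).
rewrite (eq_bigr (fun e => F1 e)); last by move=> e ->.
rewrite [X in _ * X](eq_bigr (fun e => F2 e)); last by move=> e; rewrite inE => /negbTE ->.
rewrite prod_if0.
rewrite (big_setID (pairs n)) /=.
rewrite [X in _ * (_ * X)](eq_bigr (fun e => 1)); last first.
  by move=> e; rewrite inE => /andP [/negbTE]; rewrite /F2 => ->.
rewrite [X in _ * (_ * X)]big1 // mulr1.
rewrite (eq_bigr (fun e => if P2 e then q else 0)); last first.
  by move=> e; rewrite inE /F2 => /andP [_ ->].
rewrite prod_if0.
by case: [forall e in E, P1 e]; case: [forall e in _, _]; rewrite ?mul0r ?mulr0.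
Qed.

Lemma bool_eq (E : {set {set 'I_n}}) :
  [forall e in E, P1 e] && [forall e in ~: E :&: pairs n, P2 e] =
  [&& is_graph E, [set a; b] \notin E & [forall v in T, ([set v; b] \in E) && ([set v; a] \notin E)]].
Proof.
apply/idP/idP.
  case/andP => /forall_inP H1 /forall_inP H2.
  apply/and3P; split.
  - by rewrite /is_graph; apply/fintype.subsetP => e /H1; rewrite /P1 => /and3P [].

  - by apply/negP => /H1; rewrite /P1 => /and3P [_ /eqP].
  apply/forall_inP => v vT; have /andP [va vb] := TS v vT.
  apply/andP; split.
    apply/negPn/negP => nE.
    have := H2 [set v; b]; rewrite inE pair_in vb inE nE /= => /(_ isT).
    by rewrite /P2 (imset_f (fun v => [set v; b])).
  apply/negP => /H1; rewrite /P1 => /and3P [_ _].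
  by rewrite (imset_f (fun v => [set v; a])).
rewrite /is_graph; case/and3P => /fintype.subsetP G nab /forall_inP H.
apply/andP; split; apply/forall_inP => e.
  move=> eE; rewrite /P1 (G _ eE) /=; apply/andP; split.
    by apply/eqP => eab; move: nab; rewrite -eab eE.
  apply/imsetP => -[v vT ev]; have /andP [_] := H v vT.
  by rewrite -ev eE.
rewrite !inE => /andP [neE _]; apply/imsetP => -[v vT ev].
have /andP [] := H v vT; by rewrite -ev (negbTE neE).
Qed.



Lemma abA : [set a; b] \notin As.
Proof.
apply/imsetP => -[v vT H]; have /andP [va vb] := TS v vT.
have := in2_eq b H; rewrite !inE eqxx orbT => /(_ isT).
by rewrite eq_sym (negbTE vb) eq_sym (negbTE ab).
Qed.

Lemma abB : [set a; b] \notin Bs.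
Proof.
apply/imsetP => -[v vT H]; have /andP [va vb] := TS v vT.
have := in2_eq a H; rewrite !inE eqxx /= => /(_ isT).
by rewrite eq_sym (negbTE va) (negbTE ab).
Qed.

Lemma ABdisj e : e \in As -> e \notin Bs.
Proof.
case/imsetP => v vT ->; apply/imsetP => -[w wT H]; have /andP [wa wb] := TS w wT.
have := in2_eq a H; rewrite !inE eqxx orbT => /(_ isT).
by rewrite eq_sym (negbTE wa) (negbTE ab).
Qed.

Lemma cardA : #|As| = #|T|.
Proof.
apply: card_in_imset => v w vT wT H; have /andP [va vb] := TS v vT.
have := in2_eq v H; rewrite !inE eqxx /= => /(_ isT).
by rewrite (negbTE va) orbF => /eqP.
Qed.

Lemma cardB : #|Bs| = #|T|.
Proof.
apply: card_in_imset => v w vT wT H; have /andP [va vb] := TS v vT.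
have := in2_eq v H; rewrite !inE eqxx /= => /(_ isT).
by rewrite (negbTE vb) orbF => /eqP.
Qed.

Lemma h_eq e : F1 e + F2 e =
  if e == [set a; b] then q else if e \in As then q else if e \in Bs then p else 1.
Proof.
rewrite /F1 /F2 /P1 /P2.
case: eqP => [->|neab].
  by rewrite ?eqxx pair_in ab (negbTE abA) abB /= add0r.
case: (boolP (e \in As)) => [eA|nA].
  have eP : e \in pairs n by move: eA; rewrite /As => /imsetP [v vT ->]; rewrite pair_in; case/andP: (TS v vT).
  by rewrite ?eA eP (ABdisj e eA) /= ?andbF add0r.
have neab' : e != [set a; b] by apply/eqP.
case: (boolP (e \in Bs)) => [eB|nB].
  have eP : e \in pairs n by move: eB; rewrite /Bs => /imsetP [v vT ->]; rewrite pair_in; case/andP: (TS v vT).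
  by rewrite eP ?neab' /= ?andbF addr0.
rewrite ?neab' /=.
by case: (e \in pairs n) => /=; rewrite /q ?add0r // addrC subrK.
Qed.

Lemma prod_h : \prod_e (F1 e + F2 e) = q * (p * q) ^+ #|T|.
Proof.
under eq_bigr do rewrite h_eq.
rewrite (split_prod ([set a; b] |: (As :|: Bs))).
rewrite [X in _ * X]big1 ?mulr1; last first.
  move=> e; rewrite !inE negb_or => /andP [/negbTE -> /norP [/negbTE -> /negbTE ->]] //.
rewrite big_setU1 /=; last by rewrite inE negb_or abA abB.
rewrite eqxx; congr (_ * _).
rewrite (eq_bigl [predU As & Bs]); last by move=> e; rewrite !inE.
rewrite bigU /=; last first.
  by rewrite disjoint_subset; apply/fintype.subsetP => e /ABdisj; rewrite inE.
rewrite (eq_bigr (fun _ => q)); last first.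
  move=> e eA; case: eqP => [eab|_]; last by rewrite eA.
  by move: abA; rewrite -eab eA.
rewrite [X in _ * X](eq_bigr (fun _ => p)); last first.
  move=> e eB; case: eqP => [eab|_]; last by rewrite eB; case: ifP => // /ABdisj; rewrite eB.
  by move: abB; rewrite -eab eB.
by rewrite !prodr_const cardA cardB exprMn mulrC.
Qed.


Lemma natb_and (x y : bool) : ((x && y)%:R : R) = x%:R * y%:R.
Proof. by case: x; case: y; rewrite /= ?mul1r ?mul0r. Qed.

Lemma term_eq (E : {set {set 'I_n}}) :
  (is_graph E)%:R * gnp_weight p E * ([set a; b] \notin E)%:R *
  \prod_(v in T) (([set v; b] \in E)%:R * ([set v; a] \notin E)%:R)
  = \prod_e (if e \in E then F1 e else F2 e).
Proof.
rewrite rhs_eq bool_eq.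
rewrite (eq_bigr (fun v => (([set v; b] \in E) && ([set v; a] \notin E))%:R)); last first.
  by move=> v _; rewrite natb_and.
rewrite prod_bool.
case G: (is_graph E); case N: ([set a; b] \notin E);
  case F: [forall v in T, _]; rewrite /= ?mul0r ?mulr0 ?mul1r ?mulr1 //.
rewrite /gnp_weight; congr (_ * _); congr (_ ^+ _).
have EP : E \subset pairs n by [].
rewrite -card_pairs -(cardsID E (pairs n)).
have -> : pairs n :&: E = E by apply/finset.setIidPr.
by rewrite finset.setDE finset.setIC addKn.
Qed.

Lemma sum_term :
  \sum_(E : {set {set 'I_n}}) (is_graph E)%:R * gnp_weight p E * ([set a; b] \notin E)%:R *
  \prod_(v in T) (([set v; b] \in E)%:R * ([set v; a] \notin E)%:R)
  = q * (p * q) ^+ #|T|.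
Proof.
under eq_bigr do rewrite term_eq.
rewrite -prod_h bigA_distr.
by apply: eq_bigl.
Qed.
End Main.

Section Assemble.
Variables (R : realType) (n : nat) (p : R) (a b : 'I_n).
Hypothesis ab : a != b.
Let S := [set v : 'I_n | (v != a) && (v != b)].
Let X (v : 'I_n) (E : {set {set 'I_n}}) : R := ([set v; b] \in E)%:R * ([set v; a] \notin E)%:R.

Lemma prod_ifS (J : {set 'I_n}) (f : 'I_n -> R) :
  \prod_v (if v \in J then (if v \in S then f v else 0) else 1) =
  if J \subset S then \prod_(v in J) f v else 0.
Proof.
rewrite (@split_prodG _ _ J) [X in _ * X]big1 ?mulr1; last by move=> v; rewrite inE => /negbTE ->.
rewrite (eq_bigr (fun v => if v \in S then f v else 0)); last by move=> v ->.
case: ifP => [/fintype.subsetP H|/negbT].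
  by apply: eq_bigr => v /H ->.
case/fintype.subsetPn => v vJ nvS.
by rewrite (bigD1 v vJ) /= (negbTE nvS) mul0r.
Qed.

Lemma inner_eq (J : {set 'I_n}) :
  \sum_(E : {set {set 'I_n}}) (is_graph E)%:R * gnp_weight p E * ([set a; b] \notin E)%:R *
     \prod_v (if v \in J then (if v \in S then - X v E else 0) else 1)
  = (1 - p) * \prod_v (if v \in J then (if v \in S then - (p * (1 - p)) else 0) else 1).
Proof.
transitivity (\sum_(E : {set {set 'I_n}}) (is_graph E)%:R * gnp_weight p E * ([set a; b] \notin E)%:R *
     (if J \subset S then \prod_(v in J) - X v E else 0)).
  by apply: eq_bigr => E _; rewrite (prod_ifS J (fun v => - X v E)).
rewrite (prod_ifS J (fun _ => - (p * (1 - p)))).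
case: ifP => JS; last by rewrite mulr0 big1 // => E _; rewrite mulr0.
rewrite (eq_bigr (fun E => (-1) ^+ #|J| * ((is_graph E)%:R * gnp_weight p E * ([set a; b] \notin E)%:R * \prod_(v in J) X v E))); last first.
  by move=> E _; rewrite prodrN mulrCA.
rewrite -big_distrr /= prodrN prodr_const mulrCA; congr (_ * _).
rewrite (@sum_term R n p a b J ab) //.
move=> v /(fintype.subsetP JS); by rewrite inE.
Qed.

Lemma cond_sum :
  \sum_(E : {set {set 'I_n}}) (is_graph E)%:R * gnp_weight p E * ([set a; b] \notin E)%:R *
     \prod_(v in S) (1 - X v E)
  = (1 - p) * (1 - p * (1 - p)) ^+ #|S|.
Proof.
have H E : \prod_(v in S) (1 - X v E) =
    \prod_v ((if v \in S then - X v E else 0) + 1).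
  rewrite big_mkcond /=; apply: eq_bigr => v _.
  by case: (v \in S); rewrite ?add0r // addrC.
transitivity (\sum_(E : {set {set 'I_n}}) \sum_(J : {set 'I_n}) (is_graph E)%:R * gnp_weight p E * ([set a; b] \notin E)%:R *
     \prod_v (if v \in J then (if v \in S then - X v E else 0) else 1)).
  apply: eq_bigr => E _; rewrite H bigA_distr big_distrr /=.
  by apply: eq_bigl.
rewrite exchange_big /=.
rewrite (eq_bigr (fun J : {set 'I_n} => (1 - p) * \prod_(v : 'I_n) (if v \in J then (if v \in S then - (p * (1 - p)) else 0) else 1))); last first.
  by move=> J _; rewrite inner_eq.
rewrite -big_distrr /=; congr (_ * _); symmetry.
rewrite -prodr_const big_mkcond /=.
rewrite (eq_bigr (fun v : 'I_n => (if v \in S then - (p * (1 - p)) else 0) + 1)); last first.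
  by move=> v _; case: (v \in S); rewrite ?add0r // addrC.
rewrite bigA_distr; by apply: eq_bigl.
Qed.
End Assemble.

Section Union.
Variables (R : realType) (n : nat) (p : R).
Hypothesis p01 : 0 <= p <= 1.
Implicit Types (E : {set {set 'I_n}}) (a b : 'I_n).

Let C (a b : 'I_n) (E : {set {set 'I_n}}) : R :=
  ([set a; b] \notin E)%:R *
  \prod_(v in [set v : 'I_n | (v != a) && (v != b)])
     (1 - ([set v; b] \in E)%:R * ([set v; a] \notin E)%:R).

Lemma C_ge0 a b E : 0 <= C a b E.
Proof.
rewrite /C; apply: mulr_ge0; first by case: (_ \notin _).
apply: prodr_ge0 => v _; case: (_ \in E); case: (_ \in E); rewrite /= ?mul0r ?mulr0 ?mul1r ?subr0 ?subrr //.
Qed.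

Lemma C_one a b E : a != b -> ~~ adj E a b -> dominates E a b -> C a b E = 1.
Proof.
move=> ab nadj dom; rewrite /C.
have -> : [set a; b] \notin E by move: nadj; rewrite /adj ab.
rewrite mul1r big1 // => v; rewrite inE => /andP [va vb].
case vbE: ([set v; b] \in E); last by rewrite mul0r subr0.
have : adj E v b by rewrite /adj vb vbE.
move/forallP: dom => /(_ v) /implyP H /H.
rewrite (negbTE va) orbF /adj va /= => ->.
by rewrite /= mulr0 subr0.
Qed.

Lemma weight_ge0 E : 0 <= gnp_weight p E.
Proof.
case/andP: p01 => p0 p1.
by rewrite /gnp_weight; apply: mulr_ge0; apply: exprn_ge0; rewrite ?subr_ge0.
Qed.

Lemma le_sum_term (I : finType) (F : I -> R) i : (forall j, 0 <= F j) -> F i <= \sum_j F j.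
Proof.
move=> H; rewrite (bigD1 i) //= lerDl; apply: sumr_ge0 => j _; exact: H.
Qed.

Lemma indic_le E : (has_nonadj_dom_pair E)%:R <= \sum_a \sum_b (a != b)%:R * C a b E.
Proof.
case HP: (has_nonadj_dom_pair E); last first.
  by apply: sumr_ge0 => a _; apply: sumr_ge0 => b _; apply: mulr_ge0; [case: (a != b)|apply: C_ge0].
move: HP; rewrite /has_nonadj_dom_pair => /existsP [a /existsP [b /and3P [ab nadj dom]]].
apply: le_trans (le_sum_term _ _ a _); last first.
  by move=> j; apply: sumr_ge0 => b' _; apply: mulr_ge0; [case: (j != b')|apply: C_ge0].
apply: le_trans (le_sum_term _ _ b _); last first.
  by move=> j; apply: mulr_ge0; [case: (a != j)|apply: C_ge0].
by rewrite ab C_one // mulr1.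
Qed.

Lemma card_S a b : a != b -> #|[set v : 'I_n | (v != a) && (v != b)]| = (n - 2)%N.
Proof.
move=> ab.
have -> : [set v : 'I_n | (v != a) && (v != b)] = ~: [set a; b].
  by apply/setP => v; rewrite !inE negb_or.
have H := cardsC [set a; b]; rewrite card_ord cards2 ab in H.
by rewrite -[in RHS]H addKn.
Qed.

Lemma prob_bound :
  gnp_prob p (@has_nonadj_dom_pair n) <= (n%:R) ^+ 2 * ((1 - p) * (1 - p * (1 - p)) ^+ (n - 2)).
Proof.
have q0 : 0 <= 1 - p by case/andP: p01 => _; rewrite subr_ge0.
have K0 : 0 <= (1 - p) * (1 - p * (1 - p)) ^+ (n - 2).
  apply: mulr_ge0 => //; apply: exprn_ge0; case/andP: p01 => p0 p1.
  rewrite subr_ge0; apply: (le_trans (y := 1 * 1)); last by rewrite mulr1.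
  by apply: ler_pM => //; rewrite lerBlDr lerDl.
rewrite /gnp_prob big_mkcond /=.
rewrite (eq_bigr (fun E => (is_graph E)%:R * gnp_weight p E * (has_nonadj_dom_pair E)%:R)); last first.
  by move=> E _; case: (is_graph E); case: (has_nonadj_dom_pair E); rewrite /= ?mul1r ?mulr1 ?mul0r ?mulr0.
apply: (le_trans (y := \sum_E (is_graph E)%:R * gnp_weight p E * \sum_a \sum_b (a != b)%:R * C a b E)).
  apply: ler_sum => E _; apply: ler_wpM2l; last exact: indic_le.
  by apply: mulr_ge0; [case: is_graph | apply: weight_ge0].
have -> : \sum_E (is_graph E)%:R * gnp_weight p E * \sum_a \sum_b (a != b)%:R * C a b E =
    \sum_a \sum_b (a != b)%:R * \sum_E ((is_graph E)%:R * gnp_weight p E * C a b E).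
  transitivity (\sum_E \sum_a \sum_b (a != b)%:R * ((is_graph E)%:R * gnp_weight p E * C a b E)).
    apply: eq_bigr => E _; rewrite big_distrr /=; apply: eq_bigr => a _.
    rewrite big_distrr /=; apply: eq_bigr => b _; by rewrite mulrCA.
  rewrite exchange_big; apply: eq_bigr => a _; rewrite exchange_big; apply: eq_bigr => b _.
  by rewrite -big_distrr.
apply: (le_trans (y := \sum_(a : 'I_n) \sum_(b : 'I_n) ((1 - p) * (1 - p * (1 - p)) ^+ (n - 2)))); last first.
  by rewrite !sumr_const !card_ord -mulrnA expr2 -natrM mulr_natl.
apply: ler_sum => a _; apply: ler_sum => b _.
case: (boolP (a != b)) => ab; last by rewrite mul0r.
rewrite mul1r.
under eq_bigr do rewrite /C mulrA.
by rewrite cond_sum // card_S.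
Qed.
Lemma prob_ge0 : 0 <= gnp_prob p (@has_nonadj_dom_pair n).
Proof. by apply: sumr_ge0 => E _; apply: weight_ge0. Qed.
End Union.
From mathcomp Require Import ring lra.
Section Ana.
Variable R : realType.

Lemma pow_exp_bound (x : R) (k : nat) : 0 <= x <= 1 -> (1 - x) ^+ k <= expR (- (k%:R * x)).
Proof.
case/andP => x0 x1.
rewrite -mulrN expRM_natl; apply: lerXn2r.
- by rewrite nnegrE subr_ge0.
- by rewrite nnegrE; apply: ltW; apply: expR_gt0.
- by have := expR_ge1Dx (- x); rewrite addrC.
Qed.

Lemma xexp_le (c d : R) : 0 <= c -> 0 <= d -> c * d * expR (- (c * d)) <= 1.
Proof.
move=> c0 d0; set y := c * d.
have y0 : 0 <= y by apply: mulr_ge0.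
have := expR_ge1Dx y => H.
rewrite expRN -[X in _ <= X](divff (x := expR y)); last by rewrite gt_eqF // expR_gt0.
rewrite ler_pM2r ?invr_gt0 ?expR_gt0 //; lra.
Qed.

End Ana.

Section CaseA.
Variable R : realType.
Lemma caseA (nr L t p : R) (k : nat) :
  nr = expR L -> k%:R = nr - 2 -> 1 <= L -> 24 * L ^+ 2 <= nr -> 0 <= t -> t <= L ->
  2 * (L + t) <= nr * p -> p <= 1 / 2 ->
  nr ^+ 2 * ((1 - p) * (1 - p * (1 - p)) ^+ k) <= expR (1 - t).
Proof.
move=> hnr hk L1 hL t0 tL hp p2.
have nr4 : 4 <= nr by nra.
have nr0 : 0 < nr by lra.
have p0 : 0 <= p by nra.
have [s sE] : exists s, s = L + t by exists (L + t).
have [P PE] : exists P, P * nr = 2 * s by exists (2 * s / nr); rewrite mulfVK // gt_eqF.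
have Pp : P <= p by rewrite -(ler_pM2r nr0) PE sE [p * nr]mulrC.
have P0 : 0 <= P by nra.
have h1 : P * (1 - P) <= p * (1 - p).
  have : 0 <= (p - P) * (1 - p - P) by apply: mulr_ge0; lra.
  nra.
have hs : 4 * s ^+ 2 + 4 * s <= nr by rewrite sE; nra.
have h3 : 2 * s * P + 2 * P <= 1.
  rewrite -(ler_pM2r nr0) mul1r mulrDl -!mulrA PE; nra.
have h2 : 2 * s - 1 <= (nr - 2) * (P * (1 - P)).
  have -> : (nr - 2) * (P * (1 - P)) = (P * nr) * (1 - P) - 2 * P * (1 - P) by ring.
  rewrite PE; nra.
have h4 : 2 * s - 1 <= k%:R * (p * (1 - p)).
  rewrite hk; apply: le_trans h2 _; apply: ler_wpM2l => //; lra.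
have pq01 : 0 <= p * (1 - p) <= 1 by apply/andP; split; nra.
apply: (le_trans (y := nr ^+ 2 * expR (- (k%:R * (p * (1 - p)))))).
  apply: ler_wpM2l; first by apply: exprn_ge0; lra.
  apply: (le_trans (y := 1 * (1 - p * (1 - p)) ^+ k)).
    apply: ler_wpM2r; last by lra.
    by apply: exprn_ge0; nra.
  by rewrite mul1r; apply: pow_exp_bound.
apply: (le_trans (y := nr ^+ 2 * expR (1 - 2 * s))).
  apply: ler_wpM2l; first by apply: exprn_ge0; lra.
  by rewrite ler_expR; lra.
rewrite hnr -expRM_natl -expRD ler_expR sE; lra.
Qed.
End CaseA.

Section CaseB.
Variable R : realType.
Lemma caseB (nr L lL t p : R) (k : nat) :
  nr = expR L -> L = expR lL -> k%:R = nr - 2 -> 1 <= L -> 32 * L ^+ 2 <= nr ->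
  0 <= t -> t <= lL -> lL <= L ->
  L + lL + t <= nr * (1 - p) -> 1 / 2 <= p -> p <= 1 ->
  nr ^+ 2 * ((1 - p) * (1 - p * (1 - p)) ^+ k) <= 11 * expR (1 - t).
Proof.
move=> hnr hlL hk L1 hL t0 tl lLL hq p2 p1.
have nr4 : 4 <= nr by nra.
have nr0 : 0 < nr by lra.
have [q qE] : exists q, q = 1 - p by exists (1 - p).
rewrite -qE in hq *.
have pE : p = 1 - q by rewrite qE; ring.
rewrite pE in p2 p1 *.
rewrite [(1 - q) * q]mulrC.
have [u uE] : exists u, u = L + lL + t by exists (L + lL + t).
rewrite -uE in hq.
have u3 : u <= 3 * L by lra.
have u0 : 0 <= u by lra.
have [Q QE] : exists Q, Q * nr = u by exists (u / nr); rewrite mulfVK // gt_eqF.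
have Qq : Q <= q by rewrite -(ler_pM2r nr0) QE [q * nr]mulrC.
have Q0 : 0 <= Q by nra.
have Q4 : Q <= 1 / 4.
  rewrite -(ler_pM2r nr0) QE; nra.
have [d dE] : exists d, d = q - Q by exists (q - Q).
have d0 : 0 <= d by lra.
have hs : u ^+ 2 + 2 * u <= nr by nra.
have h3 : u * Q + 2 * Q <= 1.
  rewrite -(ler_pM2r nr0) mul1r mulrDl -!mulrA QE; nra.
have h2 : u - 1 <= (nr - 2) * (Q * (1 - Q)).
  have -> : (nr - 2) * (Q * (1 - Q)) = (Q * nr) * (1 - Q) - 2 * Q * (1 - Q) by ring.
  rewrite QE; nra.
have h5 : Q * (1 - Q) + d / 4 <= q * (1 - q).
  have -> : q = Q + d by rewrite dE; ring.
  have : 0 <= d * (1 - (Q + d) - Q - 1 / 4).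
    apply: mulr_ge0 => //; lra.
  lra.
have [c cE] : exists c, c = (nr - 2) / 4 by exists ((nr - 2) / 4).
have c0 : 0 < c by rewrite cE; lra.
have h4 : u - 1 + c * d <= k%:R * (q * (1 - q)).
  rewrite hk cE; have : (nr - 2) * (Q * (1 - Q) + d / 4) <= (nr - 2) * (q * (1 - q)).
    by apply: ler_wpM2l => //; lra.
  lra.
have pq01 : 0 <= q * (1 - q) <= 1 by apply/andP; split; nra.
have [e eE] : exists e, e = expR (- (c * d)) by exists (expR (- (c * d))).
have e0 : 0 < e by rewrite eE expR_gt0.
have e1 : e <= 1 by rewrite eE expR_le1; nra.
have cde : c * d * e <= 1 by rewrite eE; apply: xexp_le; lra.
have hqe : c * (nr * (q * e)) <= c * u + nr.
  have -> : q = Q + d by rewrite dE; ring.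
  have a0 : Q * e <= Q by nra.
  have a1 : c * (nr * (Q * e)) <= c * u.
    rewrite -QE [Q * nr]mulrC; apply: ler_wpM2l; first lra.
    by apply: ler_wpM2l; lra.
  have a2 : c * (nr * (d * e)) <= nr.
    have -> : c * (nr * (d * e)) = nr * (c * d * e) by ring.
    by rewrite -[X in _ <= X]mulr1; apply: ler_wpM2l; lra.
  have -> : c * (nr * ((Q + d) * e)) = c * (nr * (Q * e)) + c * (nr * (d * e)) by ring.
  lra.
have hqe2 : nr * (q * e) <= 11 * L.
  rewrite -(ler_pM2l c0); apply: le_trans hqe _.
  rewrite cE; nra.
apply: (le_trans (y := nr ^+ 2 * (q * expR (- (k%:R * (q * (1 - q))))))).
  apply: ler_wpM2l; first by apply: exprn_ge0; lra.
  apply: ler_wpM2l; first by lra.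
  by apply: pow_exp_bound.
apply: (le_trans (y := nr ^+ 2 * (q * (expR (1 - u) * e)))).
  apply: ler_wpM2l; first by apply: exprn_ge0; lra.
  apply: ler_wpM2l; first by lra.
  by rewrite eE -expRD ler_expR; lra.
have -> : nr ^+ 2 * (q * (expR (1 - u) * e)) = (nr * (q * e)) * (nr * expR (1 - u)) by ring.
apply: (le_trans (y := (11 * L) * (nr * expR (1 - u)))).
  by apply: ler_wpM2r => //; apply: mulr_ge0; [lra | apply: ltW; apply: expR_gt0].
rewrite -mulrA; apply: ler_wpM2l; first lra.
rewrite {1}hlL hnr -!expRD uE ler_expR; lra.
Qed.
End CaseB.

Import numFieldNormedType.Exports.
Local Open Scope classical_set_scope.
Local Open Scope ring_scope.

Theorem proposition2p10 (R : realType) (omega p : nat -> R) :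
  omega @ \oo --> +oo ->
  (\forall n \near \oo,
     2 * ((ln (n%:R) + omega n) / n%:R) <= p n /\
     p n <= 1 - (ln (n%:R) + ln (ln (n%:R)) + omega n) / n%:R) ->
  (fun n => gnp_prob (p n) (@has_nonadj_dom_pair n)) @ \oo --> 0.
Proof.
move=> /cvgryPge Hom Hp.
apply/cvgrPdist_le => eps eps0.
pose M : R := Num.max 0 (1 - ln (eps / 11)).
have M0 : 0 <= M by rewrite /M le_max lexx.
have M1 : 1 - ln (eps / 11) <= M by rewrite /M le_max lexx orbT.
have [N1 _ HN1] := Hp.
have [N2 _ HN2] := Hom M.
have [N3 _ HN3] := nbhs_infty_ger (expR 192 + expR (expR M) : R).
exists (maxn N1 (maxn N2 N3)) => // n /=; rewrite !geq_max => /and3P [n1 m2 n3].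
move: (HN1 n n1) (HN2 n m2) (HN3 n n3) => [hp1 hp2] hom hB.
set nr : R := n%:R in hp1 hp2 hB *.
have e192 : 0 < expR 192 :> R by apply: expR_gt0.
have e2 : 0 < expR (expR M) :> R by apply: expR_gt0.
have nr0 : 0 < nr by lra.
set L := ln nr in hp1 hp2 *.
have hnr : nr = expR L by rewrite /L lnK // posrE.
have L192 : 192 <= L by rewrite -ler_expR -hnr; lra.
have L0 : 0 < L by lra.
set lL := ln L in hp2 *.
have hlL : L = expR lL by rewrite /lL lnK // posrE.
have lLM : M <= lL by rewrite -ler_expR -hlL -ler_expR -hnr; lra.
have lLL : lL <= L by rewrite [X in _ <= X]hlL; have := expR_ge1Dx lL; lra.
have L3 : L ^+ 3 <= 6 * nr.
  have := @expR_ge1Dxn R L 2 (ltW L0); rewrite -hnr.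
  have -> : (3`!)%:R = 6 :> R by rewrite /= !factS fact0.
  move=> H; have : L ^+ 3 / 6 <= nr by lra.
  by rewrite ler_pdivrMr //; lra.
have hL : 32 * L ^+ 2 <= nr by nra.
have n2 : (2 <= n)%N by rewrite -(ler_nat R); rewrite -/nr; nra.
have hk : ((n - 2)%N)%:R = nr - 2 :> R by rewrite natrB.
pose t := Num.min (omega n) lL.
have tw : t <= omega n by rewrite /t ge_min lexx.
have tl : t <= lL by rewrite /t ge_min lexx orbT.
have tM : M <= t by rewrite /t le_min hom lLM.
have hp : 2 * (L + t) <= nr * p n.
  apply: (le_trans (y := nr * (2 * ((L + omega n) / nr)))); last by apply: ler_wpM2l; lra.
  have -> : nr * (2 * ((L + omega n) / nr)) = 2 * (L + omega n) by field; rewrite gt_eqF.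
  lra.
have hq : L + lL + t <= nr * (1 - p n).
  apply: (le_trans (y := nr * ((L + lL + omega n) / nr))); last first.
    by apply: ler_wpM2l; lra.
  have -> : nr * ((L + lL + omega n) / nr) = L + lL + omega n by field; rewrite gt_eqF.
  lra.
have pp0 : 0 <= p n by nra.
have pp1 : p n <= 1 by nra.
have p01 : 0 <= p n <= 1 by apply/andP.
have B : gnp_prob (p n) (@has_nonadj_dom_pair n) <= 11 * expR (1 - t).
  apply: le_trans (@prob_bound R n (p n) p01) _.
  case: (lerP (p n) (1 / 2)) => hp12.
    apply: (le_trans (@caseA R nr L t (p n) (n - 2) hnr hk _ _ _ _ hp hp12)); try lra; try nra.
    rewrite ler_pMl ?expR_gt0 //; lra.
  by apply: (@caseB R nr L lL t (p n) (n - 2) hnr hlL hk); try lra; try nra.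
rewrite sub0r normrN ger0_norm; last exact: prob_ge0.
apply: le_trans B _.
rewrite -ler_pdivlMl; last lra.
rewrite mulrC -[X in _ <= X]lnK ?posrE ?divr_gt0 // ler_expR; lra.
Qed.
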